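(* Let $k\geq 0$ be an integer and $M_{k}(n)=\frac{1+(-1)^{k}k!(n-k-1)!}{n}$ for $n\ge k+1$, $M^+_k(n)=(-1)^kM_k(n)$. For $0<\lvert x\rvert<1$, \[ \sum_{n=0}^{\infty}M_{k}(n+k+1)\frac{x^{n}}{n!}=(-1)^{k}\left(k!\,\Phi(x,1,k+1)-\frac{\gamma(k+1,-x)}{x^{k+1}}\right), \] and \[ \sum_{n=0}^{\infty}M^{+}_{k}(n+k+1)\frac{x^{n}}{n!}=k!\,\Phi(x,1,k+1)-\frac{\gamma(k+1,-x)}{x^{k+1}}. \]
   Context: $\Phi(x,s,a)=\sum_{n=0}^{\infty}\frac{x^{n}}{(n+a)^{s}}$ is the Lerch transcendent, and $\gamma(a,z)=z^{a}\sum_{n=0}^{\infty}\frac{(-z)^{n}}{n!(n+a)}$ is the lower incomplete gamma function. *)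

(* Defs.v *)
From Stdlib Require Import Reals Factorial.
From Coquelicot Require Import Coquelicot.
Open Scope R_scope.

Definition lerchPhi (x : R) (s : nat) (a : R) : R :=
  Series (fun n => x ^ n / (INR n + a) ^ s).

(* Lower incomplete gamma gamma(a,z) = z^a sum_{n>=0} (-z)^n / (n! (n+a)),
   for a a positive integer (so z^a is the ordinary power). *)
Definition lowerGamma (a : nat) (z : R) : R :=
  z ^ a * Series (fun n => (- z) ^ n / (INR (fact n) * (INR n + INR a))).

(* M_k(n) = (1 + (-1)^k k! (n-k-1)!) / n, meaningful for n >= k+1. *)
Definition Mk (k n : nat) : R :=
  (1 + (-1) ^ k * INR (fact k) * INR (fact (n - k - 1))) / INR n.

Definition Mkplus (k n : nat) : R := (-1) ^ k * Mk k n.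

(* Main.v *)
Require Import Defs.
From Stdlib Require Import Reals Factorial Lra Lia.
From Coquelicot Require Import Coquelicot.
Open Scope R_scope.

Lemma ex_geom_bound (a : nat -> R) x : Rabs x < 1 ->
  (forall n, Rabs (a n) <= Rabs x ^ n) -> ex_series a.
Proof.
  intros Hx Hb.
  apply (@ex_series_le R_AbsRing R_CompleteNormedModule a (fun n => Rabs x ^ n)).
  - intros n. apply Hb.
  - exists (/ (1 - Rabs x)). apply is_series_geom. rewrite Rabs_Rabsolu; exact Hx.
Qed.

Lemma m1sq k : (-1) ^ k * (-1) ^ k = 1.
Proof. rewrite <- Rpow_mult_distr. replace (-1 * -1) with 1 by ring. apply pow1. Qed.

Lemma div_bound x n d : 1 <= d -> Rabs (x ^ n / d) <= Rabs x ^ n.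
Proof.
  intros Hd. rewrite Rabs_div; [|lra]. rewrite <- RPow_abs.
  rewrite (Rabs_right d) by lra.
  unfold Rdiv. rewrite <- (Rmult_1_r (Rabs x ^ n)) at 2.
  apply Rmult_le_compat_l. apply pow_le, Rabs_pos.
  rewrite <- Rinv_1. apply Rinv_le_contravar; lra.
Qed.

Theorem mainTheorem13 (k : nat) (x : R) :
  0 < Rabs x < 1 ->
  is_series (fun n => Mk k (n + k + 1) * x ^ n / INR (fact n))
    ((-1) ^ k * (INR (fact k) * lerchPhi x 1 (INR k + 1)
                 - lowerGamma (k + 1) (- x) / x ^ (k + 1)))
  /\
  is_series (fun n => Mkplus k (n + k + 1) * x ^ n / INR (fact n))
    (INR (fact k) * lerchPhi x 1 (INR k + 1)
     - lowerGamma (k + 1) (- x) / x ^ (k + 1)).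
Proof.
  intros [Hx0 Hx1].
  assert (Hx : x <> 0). { intro H; subst; rewrite Rabs_R0 in Hx0; lra. }
  set (A := fun n => x ^ n / (INR (fact n) * (INR n + INR (k + 1)))).
  set (B := fun n => x ^ n / (INR n + (INR k + 1)) ^ 1).
  assert (HA : ex_series A).
  { apply (ex_geom_bound _ x Hx1). intros n. apply div_bound.
    pose proof (INR_fact_lt_0 n). pose proof (pos_INR n).
    rewrite plus_INR. change (INR 1) with 1. pose proof (pos_INR k).
    assert (1 <= INR (fact n)).
    { apply (le_INR 1). apply lt_O_fact. }
    nra. }
  assert (HB : ex_series B).
  { apply (ex_geom_bound _ x Hx1). intros n. apply div_bound.
    pose proof (pos_INR n). pose proof (pos_INR k). simpl. lra. }
  assert (HL : lowerGamma (k + 1) (- x) / x ^ (k + 1) = (-1) ^ (k + 1) * Series A).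
  { unfold lowerGamma.
    rewrite (Series_ext _ A).
    2:{ intros n. unfold A. f_equal. f_equal. ring. }
    replace (- x) with (-1 * x) by ring. rewrite Rpow_mult_distr.
    field. apply pow_nonzero; exact Hx. }
  assert (H1 : is_series (fun n => Mk k (n + k + 1) * x ^ n / INR (fact n))
    ((-1) ^ k * (INR (fact k) * lerchPhi x 1 (INR k + 1)
                 - lowerGamma (k + 1) (- x) / x ^ (k + 1)))).
  { rewrite HL. unfold lerchPhi. fold B.
    replace ((-1) ^ k * (INR (fact k) * Series B - (-1) ^ (k + 1) * Series A))
      with (Series A + ((-1) ^ k * INR (fact k)) * Series B).
    2:{ rewrite pow_add, pow_1.
        replace ((-1) ^ k * (INR (fact k) * Series B - (-1) ^ k * -1 * Series A))
          with ((-1) ^ k * INR (fact k) * Series B + ((-1) ^ k * (-1) ^ k) * Series A) by ring.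
        rewrite m1sq. ring. }
    apply (is_series_ext (fun n => plus (A n) (scal ((-1) ^ k * INR (fact k)) (B n)))).
    - intros n. unfold plus, scal; simpl; unfold mult; simpl. unfold A, B, Mk.
      replace (n + k + 1 - k - 1)%nat with n by lia.
      rewrite !plus_INR. simpl INR.
      pose proof (INR_fact_lt_0 n). pose proof (pos_INR n). pose proof (pos_INR k).
      field. lra.
    - change (Series A + (-1) ^ k * INR (fact k) * Series B) with
        (plus (Series A) (scal ((-1) ^ k * INR (fact k)) (Series B))).
      apply (@is_series_plus R_AbsRing R_NormedModule). apply Series_correct, HA.
      apply (@is_series_scal R_AbsRing R_NormedModule). apply Series_correct, HB. }
  split; [exact H1|].
  apply (is_series_ext (fun n => scal ((-1) ^ k) (Mk k (n + k + 1) * x ^ n / INR (fact n)))).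
  - intros n. unfold scal; simpl; unfold mult; simpl. unfold Mkplus. field.
    pose proof (INR_fact_lt_0 n). lra.
  - eapply is_series_ext; [intros n; reflexivity|].
    replace (INR (fact k) * lerchPhi x 1 (INR k + 1) - lowerGamma (k + 1) (- x) / x ^ (k + 1))
      with ((-1) ^ k * ((-1) ^ k * (INR (fact k) * lerchPhi x 1 (INR k + 1)
                 - lowerGamma (k + 1) (- x) / x ^ (k + 1)))).
    2:{ rewrite <- Rmult_assoc, m1sq. ring. }
    apply (is_series_scal ((-1)^k)) in H1. exact H1.
Qed.
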